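(* Let $s\in\mathbb{R}$ be Gaussian distributed with variance $\sigma^2$ (arbitrary mean). Let $t\in\mathbb{R}$, $p\in(0,1/e]$, $L=8\sigma^{-1}\sqrt{\ln p^{-1}}$, and $0\le\varepsilon\le 1/L$. If $\Pr[s\ge t-\varepsilon]\ge p$ and $\Pr[s\le t]\ge p$, then \[ \Pr[s\ge t-\varepsilon\mid s\le t]\le e^3\varepsilon L\cdot\Pr[s\ge t]. \] *)

(* Defs.v *)
From HB Require Import structures.
From mathcomp Require Import all_boot all_order all_algebra.
From mathcomp Require Import all_classical all_reals all_analysis.
Set Implicit Arguments. Unset Strict Implicit. Unset Printing Implicit Defensive.
Import Order.TTheory GRing.Theory Num.Theory.
Local Open Scope classical_set_scope.
Local Open Scope ring_scope.

(* Probability that s ~ N(m, sigma^2) lies in A, as a real number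
   (normal_prob is the library's Gaussian probability measure, sigma = std dev). *)
Definition gPr {R : realType} (m sigma : R) (A : set R) : R :=
  fine (normal_prob m sigma A).

Definition gPr_cond {R : realType} (m sigma : R) (A B : set R) : R :=
  gPr m sigma (A `&` B) / gPr m sigma B.

(* Main.v *)
Require Import Defs.
From HB Require Import structures.
From mathcomp Require Import all_boot all_order all_algebra.
From mathcomp Require Import all_classical all_reals all_analysis.
From mathcomp Require Import measurable_realfun normal_distribution ring lra.
Import Order.TTheory GRing.Theory Num.Theory.
Local Open Scope classical_set_scope.
Local Open Scope ring_scope.
Lemma aux (R : realFieldType) (s a u : R) : 0 < s -> a <= u ->
  0 <= -(3*a)/(s^+2*8) + -u/((2*s)^+2*2%:R) - -u/(s^+2*2%:R).
Proof.
move=> k0 au.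
have kn : s != 0 by rewrite gt_eqF.
have -> : -(3*a)/(s^+2*8) + -u/((2*s)^+2*2%:R) - -u/(s^+2*2%:R) = 3*(u-a)/(s^+2*8) by field.
by rewrite divr_ge0 ?mulr_ge0 ?subr_ge0 // ?exprn_ge0 // ltW.
Qed.

Lemma hN (R : realFieldType) (s d e y : R) : 0 < s -> 0 <= d -> 0 <= e ->
  d - e <= y -> y <= d ->
  - y ^+ 2 / (s ^+ 2 *+ 2) <= - d ^+ 2 / (s ^+ 2 *+ 2) + d * e / s ^+ 2.
Proof.
move=> s0 d0 e0 h1 h2.
have sn : s != 0 by rewrite gt_eqF.
have key : d ^+ 2 - 2 * d * e <= y ^+ 2 by nra.
rewrite -subr_ge0.
have -> : - d ^+ 2 / (s ^+ 2 *+ 2) + d * e / s ^+ 2 - - y ^+ 2 / (s ^+ 2 *+ 2)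
  = (y ^+ 2 - (d ^+ 2 - 2 * d * e)) / (s ^+ 2 * 2%:R) by rewrite -mulr_natr; field.
by rewrite divr_ge0 ?subr_ge0 // mulr_ge0 // exprn_ge0 // ltW.
Qed.

Lemma hN' (R : realFieldType) (s d y : R) : 0 < s -> y <= d -> d <= 0 ->
  - y ^+ 2 / (s ^+ 2 *+ 2) <= - d ^+ 2 / (s ^+ 2 *+ 2).
Proof.
move=> s0 h1 h2.
have key : d ^+ 2 <= y ^+ 2 by nra.
rewrite !mulNr lerN2 ler_pM2r // invr_gt0 pmulrn_lgt0 // exprn_gt0 //.
Qed.

Lemma hQ (R : realFieldType) (s d h y : R) : 0 < s -> 0 <= d ->
  h * (d + s) = s ^+ 2 -> d <= y -> y <= d + h ->
  - d ^+ 2 / (s ^+ 2 *+ 2) + - 1 <= - y ^+ 2 / (s ^+ 2 *+ 2).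
Proof.
move=> s0 d0 hh h1 h2.
have sn : s != 0 by rewrite gt_eqF.
have h0 : 0 <= h by nra.
have hs : h <= s by nra.
have key : y ^+ 2 <= d ^+ 2 + s ^+ 2 * 2 by nra.
rewrite -subr_ge0.
have -> : - y ^+ 2 / (s ^+ 2 *+ 2) - (- d ^+ 2 / (s ^+ 2 *+ 2) + - 1)
  = (d ^+ 2 + s ^+ 2 * 2 - y ^+ 2) / (s ^+ 2 * 2%:R) by rewrite -mulr_natr; field.
by rewrite divr_ge0 ?subr_ge0 // mulr_ge0 // exprn_ge0 // ltW.
Qed.

Lemma hB (R : realFieldType) (s y : R) : 0 < s -> y ^+ 2 <= s ^+ 2 ->
  - (1 / 2) <= - y ^+ 2 / (s ^+ 2 *+ 2).
Proof.
move=> s0 h.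
have sn : s != 0 by rewrite gt_eqF.
rewrite -subr_ge0.
have -> : - y ^+ 2 / (s ^+ 2 *+ 2) - - (1 / 2)
  = (s ^+ 2 - y ^+ 2) / (s ^+ 2 * 2%:R) by rewrite -mulr_natr; field.
by rewrite divr_ge0 ?subr_ge0 // mulr_ge0 // exprn_ge0 // ltW.
Qed.

Lemma htail (R : rcfType) (s w l : R) : 0 < s -> 0 <= w -> 1 <= l ->
  - l <= 1 + - (3 * w ^+ 2) / (s ^+ 2 * 8) -> w <= 3 * Num.sqrt l * s.
Proof.
move=> s0 w0 l1 h.
have sn : s != 0 by rewrite gt_eqF.
have h2 : 3 * w ^+ 2 / (s ^+ 2 * 8) <= 1 + l by rewrite mulNr in h; lra.
rewrite ler_pdivrMr ?mulr_gt0 ?exprn_gt0 // in h2.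
have r2 : Num.sqrt l ^+ 2 = l by rewrite sqr_sqrtr // (le_trans _ l1).
have r0 : 0 <= Num.sqrt l by apply: sqrtr_ge0.
have z0 : 0 <= 3 * Num.sqrt l * s by rewrite !mulr_ge0 // ltW.
have : w ^+ 2 <= (3 * Num.sqrt l * s) ^+ 2.
  rewrite !exprMn r2; nra.
move=> hw; nra.
Qed.

Lemma fin1 (R : realFieldType) (e K A B E3 L h s Em1 Eh : R) :
  0 <= e -> 0 <= K -> 0 <= A -> B <= E3 * L * h * s * K * Em1 * Eh ->
  e * (K * (A * B)) <= E3 * e * L * (h * (K * (A * Em1))) * (s * (K * Eh)).
Proof.
move=> e0 K0 A0 hB.
have -> : E3 * e * L * (h * (K * (A * Em1))) * (s * (K * Eh)) =
  e * (K * (A * (E3 * L * h * s * K * Em1 * Eh))) by ring.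
by rewrite ler_wpM2l // ler_wpM2l // ler_wpM2l.
Qed.

Lemma fin2 (R : realFieldType) (e K A E3 L h s Em1 Eh : R) :
  0 <= e -> 0 <= K -> 0 <= A -> 1 <= E3 * L * h * s * K * Em1 * Eh ->
  e * (K * A) <= E3 * e * L * (s * (K * Eh)) * (h * (K * (A * Em1))).
Proof.
move=> e0 K0 A0 hB.
have -> : E3 * e * L * (s * (K * Eh)) * (h * (K * (A * Em1))) =
  e * (K * (A * (E3 * L * h * s * K * Em1 * Eh))) by ring.
rewrite ler_wpM2l // ler_wpM2l //.
by rewrite -[leLHS]mulr1 ler_wpM2l.
Qed.


Section G.
Variables (R : realType) (m s : R).
Hypothesis s0 : 0 < s.

Lemma pdfE x : normal_pdf m s x = normal_peak s * expR (- (x - m) ^+ 2 / (s ^+ 2 *+ 2)).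
Proof. by rewrite /normal_pdf gt_eqF. Qed.

Lemma gPrE (A : set R) : measurable A -> (gPr m s A)%:E = normal_prob m s A.
Proof.
move=> mA; rewrite /gPr fineK // ge0_fin_numE //.
by apply: (le_lt_trans (probability_le1 (normal_prob m s) mA)); rewrite ltry.
Qed.

Lemma gPr_ge0 (A : set R) : 0 <= gPr m s A.
Proof. by apply: fine_ge0. Qed.

Lemma gPr_le (A B : set R) : measurable A -> measurable B -> A `<=` B ->
  gPr m s A <= gPr m s B.
Proof.
move=> mA mB AB; rewrite -lee_fin !gPrE //.
by apply: le_measure => //; rewrite inE.
Qed.

Lemma mpdf (D : set R) : measurable_fun D (EFin \o normal_pdf m s).
Proof.
apply/measurable_EFinP; apply: measurable_funTS; exact: measurable_normal_pdf.
Qed.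

Lemma gPr_itv_ub a b c : a <= b -> 0 <= c ->
  (forall x, a <= x <= b -> normal_pdf m s x <= c) ->
  gPr m s `[a, b] <= (b - a) * c.
Proof.
move=> ab c0 H; rewrite -lee_fin gPrE //.
rewrite /normal_prob.
apply: (@le_trans _ _ (\int[lebesgue_measure]_(x in `[a, b]) (cst c%:E) x)%E).
  apply: ge0_le_integral => //.
  all: try (by move=> x _; rewrite lee_fin normal_pdf_ge0).
  all: try exact: mpdf.
  all: try (by move=> x; rewrite /= in_itv /= => /H; rewrite lee_fin).
rewrite integral_cst // [X in (_ * X)%E]lebesgue_measure_itv /=.
case: ifPn => [_|]; first by rewrite -EFinD -EFinM mulrC.
by rewrite mule0 lee_fin mulr_ge0 // subr_ge0.
Qed.

Lemma gPr_itv_lb a b c : a <= b -> 0 <= c ->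
  (forall x, a <= x <= b -> c <= normal_pdf m s x) ->
  (b - a) * c <= gPr m s `[a, b].
Proof.
move=> ab c0 H; rewrite -lee_fin gPrE //.
rewrite /normal_prob.
apply: (@le_trans _ _ (\int[lebesgue_measure]_(x in `[a, b]) (cst c%:E) x)%E); last first.
  apply: ge0_le_integral => //.
  all: try exact: mpdf.
  all: try (by move=> x; rewrite /= in_itv /= => /H; rewrite lee_fin).
  all: try (by move=> x _; rewrite lee_fin).
rewrite integral_cst // [X in (_ * X)%E]lebesgue_measure_itv /=.
idtac.
case: ifPn => [_|]; first by rewrite -EFinD -EFinM mulrC.
rewrite lte_fin -leNgt => ba.
have -> : b = a by apply/eqP; rewrite eq_le ab ba.
by rewrite subrr mul0r mule0.
Qed.


Lemma pdf_le x c2 : c2 <= (x - m) ^+ 2 ->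
  normal_pdf m s x <= normal_peak s * expR (- c2 / (s ^+ 2 *+ 2)).
Proof.
move=> h; rewrite pdfE ler_wpM2l ?normal_peak_ge0 // ler_expR !mulNr lerN2.
by rewrite ler_pM2r // invr_gt0 pmulrn_lgt0 // exprn_gt0.
Qed.

Lemma pdf_ge x c2 : (x - m) ^+ 2 <= c2 ->
  normal_peak s * expR (- c2 / (s ^+ 2 *+ 2)) <= normal_pdf m s x.
Proof.
move=> h; rewrite pdfE ler_wpM2l ?normal_peak_ge0 // ler_expR !mulNr lerN2.
by rewrite ler_pM2r // invr_gt0 pmulrn_lgt0 // exprn_gt0.
Qed.

Lemma peak2 : normal_peak s = 2 * normal_peak (2 * s).
Proof.
rewrite /normal_peak.
have -> : (2 * s) ^+ 2 * pi *+ 2 = 2 ^+ 2 * (s ^+ 2 * pi *+ 2).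
  by rewrite exprMn -mulrA mulrnAr.
rewrite sqrtrM ?exprn_ge0 // sqrtr_sqr ger0_norm // invfM mulrA divff ?mul1r //.
Qed.

End G.


Section G2.
Variables (R : realType) (m s : R).
Hypothesis s0 : 0 < s.
Lemma mpdfc (D : set R) c s' : measurable_fun D (fun x => (c * normal_pdf m s' x)%:E).
Proof.
apply/measurable_EFinP; apply: measurable_funTS; apply: measurable_funM => //.
exact: measurable_normal_pdf.
Qed.

Lemma gPr_tail (A : set R) a2 : measurable A ->
  (forall y, A y -> a2 <= (y - m) ^+ 2) ->
  gPr m s A <= 2 * expR (- (3 * a2) / (s ^+ 2 * 8)).
Proof.
move=> mA H; rewrite -lee_fin gPrE // /normal_prob.
set c := 2 * expR _.
have c0 : 0 <= c by rewrite mulr_ge0 // expR_ge0.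
apply: (@le_trans _ _ (\int[lebesgue_measure]_(x in A) ((c * normal_pdf m (2 * s) x)%:E))%E).
  apply: ge0_le_integral => //.
  all: try (by move=> x _; rewrite lee_fin normal_pdf_ge0).
  all: try exact: mpdf.
  all: try exact: mpdfc.
  move=> y /H ha; rewrite lee_fin.
  have s2 : 0 < 2 * s by rewrite mulr_gt0.
  rewrite (@pdfE R m s s0) (@pdfE R m (2 * s) s2) (@peak2 R s) /c.
  rewrite [X in _ <= X]mulrACA -expRD.
  apply: ler_wpM2l; first by rewrite mulr_ge0 // normal_peak_ge0.
  rewrite ler_expR -subr_ge0.
  by have := @aux _ s a2 ((y - m) ^+ 2) s0 ha; rewrite !mulr_natr.
apply: (@le_trans _ _ (\int[lebesgue_measure]_(x in [set: R]) ((c * normal_pdf m (2 * s) x)%:E))%E).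
  apply: ge0_subset_integral => //.
  - exact: mpdfc.
  - by move=> x _; rewrite lee_fin mulr_ge0 // normal_pdf_ge0.
under eq_integral do rewrite EFinM.
rewrite ge0_integralZl //.
- by rewrite integral_normal_pdf mule1.
- exact: mpdf.
- by move=> x _; rewrite lee_fin normal_pdf_ge0.
Qed.
End G2.


Lemma core (R : realType) (s r e D K : R) : 0 < s -> 1 <= r -> 0 <= e ->
  e * (8 / s * r) <= 1 -> 0 <= D -> D <= e + 3 * r * s -> 1 / 3 <= s * K ->
  expR (D * e / s ^+ 2) <=
  expR 3 * (8 / s * r) * (s ^+ 2 / (D + s)) * s * K * expR (- 1) * expR (- (1 / 2)).
Proof.
move=> s0 r1 e0 eL D0 De sK.
have sn : s != 0 by rewrite gt_eqF.
have Ds : 0 < D + s by lra.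
have Dsn : D + s != 0 by rewrite gt_eqF.
have e8 : e * 8 * r <= s.
  have : e * (8 / s * r) * s <= s by rewrite -[leRHS]mul1r ler_pM2r.
  have -> : e * (8 / s * r) * s = e * 8 * r by field.
  by [].
have rs : s <= r * s by rewrite -[leLHS]mul1r ler_pM2r.
have e8' : e * 8 <= s by nra.
have hDe : D * e / s ^+ 2 <= 1 / 2.
  rewrite ler_pdivrMr ?exprn_gt0 //.
  have : D * e <= (e + 3 * r * s) * e by nra.
  nra.
have -> : expR 3 * (8 / s * r) * (s ^+ 2 / (D + s)) * s * K * expR (- 1) * expR (- (1 / 2))
  = expR (1 / 2) * (expR 1 * ((8 * r * s / (D + s)) * (s * K))).
  have -> : expR 3 = expR (1 / 2) * expR 1 * expR 1 * expR (1 / 2) :> R.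
    by rewrite -!expRD; congr expR; lra.
  rewrite !expRN.
  have h1 : expR 1 != 0 :> R by rewrite gt_eqF ?expR_gt0.
  have h2 : expR (1 / 2) != 0 :> R by rewrite gt_eqF ?expR_gt0.
  by field; rewrite Dsn h1 h2 sn.
rewrite -[leLHS]mulr1 ler_pM ?expR_ge0 // ?ler_expR //.
have g : 3 / 2 <= 8 * r * s / (D + s).
  rewrite ler_pdivlMr //; nra.
have X : 1 / 2 <= 8 * r * s / (D + s) * (s * K).
  have -> : 1 / 2 = 3 / 2 * (1 / 3) :> R by field.
  by rewrite ler_pM //.
have E2 : 2 <= expR 1 :> R by have := expR_ge1Dx (1 : R); lra.
apply: (@le_trans _ _ (2 * (1 / 2))); first lra.
by rewrite ler_pM.
Qed.

Lemma sK (R : realType) (s : R) : 0 < s -> 1 / 3 <= s * normal_peak s.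
Proof.
move=> s0; rewrite /normal_peak.
have /andP[_ pi2] := @pihalf_02 R.
have pi4 : pi < 4 :> R by lra.
have pi0 : 0 < pi :> R by apply: pi_gt0.
set X := s ^+ 2 * pi *+ 2.
have X0 : 0 < X by rewrite /X pmulrn_lgt0 // mulr_gt0 // exprn_gt0.
have X9 : X <= (3 * s) ^+ 2.
  rewrite /X -mulr_natr exprMn.
  have : 0 < s ^+ 2 by rewrite exprn_gt0.
  nra.
have sq : Num.sqrt X <= 3 * s.
  have n3 : `|3 * s| = 3 * s by rewrite ger0_norm // mulr_ge0 // ltW.
  by rewrite -n3 -sqrtr_sqr ler_sqrt // sqr_ge0.
have sq0 : 0 < Num.sqrt X by rewrite sqrtr_gt0.
rewrite ler_pdivlMr //.
lra.
Qed.


Theorem lemma4p8 (R : realType) (m sigma t p eps : R)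
  (hsigma : 0 < sigma)
  (hp0 : 0 < p) (hp1 : p <= (expR 1)^-1)
  (heps0 : 0 <= eps)
  (heps1 : eps <= (8 / sigma * Num.sqrt (ln p^-1))^-1)
  (h1 : p <= gPr m sigma `[t - eps, +oo[)
  (h2 : p <= gPr m sigma `]-oo, t]) :
  gPr_cond m sigma `[t - eps, +oo[ `]-oo, t]
    <= expR 3 * eps * (8 / sigma * Num.sqrt (ln p^-1)) * gPr m sigma `[t, +oo[.
Proof.
set l := ln p^-1.
set r := Num.sqrt l.
set L := 8 / sigma * r.
have pV : expR 1 <= p^-1.
  by rewrite -(invrK (expR 1)) lef_pV2 ?posrE ?invr_gt0 ?expR_gt0.
have l1 : 1 <= l.
  have : ln (expR 1) <= l by rewrite /l ler_ln // posrE ?expR_gt0 ?invr_gt0.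
  by rewrite expRK.
have r1 : 1 <= r by rewrite /r -sqrtr1 ler_sqrt // (le_trans _ l1).
have r0 : 0 < r by lra.
have hpE : p = expR (- l) by rewrite /l lnV ?posrE // opprK lnK.
have L0 : 0 < L by rewrite /L; apply: mulr_gt0 => //; apply: divr_gt0.
have eL : eps * L <= 1.
  by move: heps1; rewrite -/r -/L -[L^-1]div1r ler_pdivlMr.
have E2 : 2 <= expR 1 :> R by have := expR_ge1Dx (1 : R); lra.
have tail : forall w, 0 <= w -> p <= 2 * expR (- (3 * w ^+ 2) / (sigma ^+ 2 * 8)) ->
    w <= 3 * r * sigma.
  move=> w w0 h; apply: htail => //.
  rewrite -ler_expR -hpE expRD; apply: (le_trans h).
  by rewrite ler_wpM2r // expR_ge0.
have Iset : `[t - eps, +oo[ `&` `]-oo, t] = `[t - eps, t]%classic.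
  apply/seteqP; split => x /=; rewrite !in_itv /=.
    by rewrite andbT => -[-> ->].
  by rewrite andbT => /andP[-> ->].
set K := normal_peak sigma.
set k := sigma ^+ 2 *+ 2.
have K0 : 0 <= K by apply: normal_peak_ge0.
have sK1 := @sK R sigma hsigma.
have Bn0 : 0 < gPr m sigma `]-oo, t] by lra.
rewrite /gPr_cond Iset ler_pdivrMr //.
have mI : forall a b : R, measurable (`[a, b]%classic : set R).
  by move=> a b; apply: measurable_itv.
have pdfE' := @pdfE R m sigma hsigma.
have [mt|tm] := leP m t.
- set d := t - m.
  have d0 : 0 <= d by rewrite /d subr_ge0.
  have Dle : d <= eps + 3 * r * sigma.
    have rs0 : 0 <= r * sigma by rewrite mulr_ge0 // ltW.
    case: (leP eps d) => de; last by lra.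
    have := tail (d - eps); rewrite subr_ge0 => /(_ de).
    have T := @gPr_tail R m sigma hsigma `[t - eps, +oo[ ((d - eps) ^+ 2)
      (@measurable_itv _ _) .
    move=> /(_ (le_trans h1 (T _))) H.
    suff : d - eps <= 3 * r * sigma by lra.
    apply: H => y /=; rewrite in_itv /= andbT => hy.
    have : 0 <= d - eps <= y - m by rewrite subr_ge0 de /= /d; lra.
    by move=> /andP[a b]; nra.
  set A := expR (- d ^+ 2 / k).
  have A0 : 0 <= A by apply: expR_ge0.
  have N : gPr m sigma `[t - eps, t] <= (t - (t - eps)) * (K * (A * expR (d * eps / sigma ^+ 2))).
    apply: (@gPr_itv_ub R m sigma); first lra.
      by rewrite mulr_ge0 // mulr_ge0 // expR_ge0.
    move=> x /andP[x1 x2]; rewrite pdfE' ler_wpM2l // /A -expRD ler_expR.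
    by apply: hN => //; rewrite /d; lra.
  have Dsn : d + sigma != 0 by rewrite gt_eqF //; lra.
  set h := sigma ^+ 2 / (d + sigma).
  have hh : h * (d + sigma) = sigma ^+ 2 by rewrite /h divfK.
  have h0 : 0 <= h by rewrite /h divr_ge0 ?exprn_ge0 ?ltW //; lra.
  have Qlb : h * (K * (A * expR (- 1))) <= gPr m sigma `[t, +oo[.
    apply: (@le_trans _ _ (gPr m sigma `[t, t + h]%classic)).
      have X := @gPr_itv_lb R m sigma t (t + h) (K * (A * expR (- 1))).
      rewrite (_ : t + h - t = h) in X; last by lra.
      apply: X; first lra.
        by rewrite mulr_ge0 // mulr_ge0 // expR_ge0.
      move=> x /andP[x1 x2]; rewrite pdfE' ler_wpM2l // /A -expRD ler_expR.
      have Y := @hQ R sigma d h (x - m) hsigma d0 hh.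
      by apply: Y; rewrite /d; lra.
    apply: gPr_le => //.
    by move=> x /=; rewrite !in_itv /= => /andP[-> _].
  have Blb : sigma * (K * expR (- (1 / 2))) <= gPr m sigma `]-oo, t].
    apply: (@le_trans _ _ (gPr m sigma `[m - sigma, m]%classic)).
      have X := @gPr_itv_lb R m sigma (m - sigma) m (K * expR (- (1 / 2))).
      rewrite (_ : m - (m - sigma) = sigma) in X; last by lra.
      apply: X; first lra.
        by rewrite mulr_ge0 // expR_ge0.
      move=> x /andP[x1 x2]; rewrite pdfE' ler_wpM2l // ler_expR.
      apply: hB => //.
      have : 0 <= m - x <= sigma by lra.
      by move=> /andP[a b]; nra.
    apply: gPr_le => //.
    by move=> x /=; rewrite !in_itv /= => /andP[_ xm]; apply: le_trans mt.
  have C := @core R sigma r eps d K hsigma r1 heps0 eL d0 Dle sK1.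
  apply: (le_trans N); rewrite (_ : t - (t - eps) = eps); last by lra.
  apply: (le_trans (@fin1 _ _ _ _ _ _ _ _ _ _ _ heps0 K0 A0 C)).
  have L0' : 0 <= 8 / sigma * r by rewrite ltW.
  apply: ler_pM.
  - have E0 : 0 <= expR 3 * eps * (8 / sigma * r) by rewrite mulr_ge0 // mulr_ge0 // expR_ge0.
    by apply: mulr_ge0 => //; apply: mulr_ge0 => //; rewrite mulr_ge0 // mulr_ge0 // expR_ge0.
  - by apply: mulr_ge0; [exact: ltW | apply: mulr_ge0 => //; exact: expR_ge0].
  - rewrite ler_wpM2l //.
    by rewrite mulr_ge0 // mulr_ge0 // expR_ge0.
  - exact: Blb.
- set D := m - t.
  have D0 : 0 <= D by rewrite /D subr_ge0 ltW.
  have rs0 : 0 <= r * sigma by rewrite mulr_ge0 // ltW.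
  have Dle3 : D <= 3 * r * sigma.
    apply: tail => //.
    apply: (le_trans h2).
    apply: (@gPr_tail R m sigma hsigma `]-oo, t] (D ^+ 2) (@measurable_itv _ _)).
    move=> y /=; rewrite in_itv /= => hy.
    have : 0 <= D <= m - y by rewrite D0 /D; lra.
    by move=> /andP[a b]; nra.
  have Dle : D <= eps + 3 * r * sigma by lra.
  set A := expR (- (t - m) ^+ 2 / k).
  have A0 : 0 <= A by apply: expR_ge0.
  have N : gPr m sigma `[t - eps, t] <= (t - (t - eps)) * (K * A).
    apply: (@gPr_itv_ub R m sigma); first lra.
      by rewrite mulr_ge0.
    move=> x /andP[x1 x2]; rewrite pdfE' ler_wpM2l // /A ler_expR.
    by apply: hN' => //; lra.
  have Dsn : D + sigma != 0 by rewrite gt_eqF //; lra.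
  set h := sigma ^+ 2 / (D + sigma).
  have hh : h * (D + sigma) = sigma ^+ 2 by rewrite /h divfK.
  have h0 : 0 <= h by rewrite /h divr_ge0 ?exprn_ge0 ?ltW //; lra.
  have Blb : h * (K * (A * expR (- 1))) <= gPr m sigma `]-oo, t].
    apply: (@le_trans _ _ (gPr m sigma `[t - h, t]%classic)).
      have X := @gPr_itv_lb R m sigma (t - h) t (K * (A * expR (- 1))).
      rewrite (_ : t - (t - h) = h) in X; last by lra.
      apply: X; first lra.
        by rewrite mulr_ge0 // mulr_ge0 // expR_ge0.
      move=> x /andP[x1 x2]; rewrite pdfE' ler_wpM2l // /A -expRD ler_expR.
      have Y := @hQ R sigma D h (m - x) hsigma D0 hh.
      have e1 : (m - x) ^+ 2 = (x - m) ^+ 2 by rewrite -opprB sqrrN.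
      have e2 : D ^+ 2 = (t - m) ^+ 2 by rewrite /D -opprB sqrrN.
      rewrite -e1 -e2.
      by apply: Y; rewrite /D; lra.
    apply: gPr_le => //.
    by move=> x /=; rewrite !in_itv /= => /andP[_ ->].
  have Qlb : sigma * (K * expR (- (1 / 2))) <= gPr m sigma `[t, +oo[.
    apply: (@le_trans _ _ (gPr m sigma `[m, m + sigma]%classic)).
      have X := @gPr_itv_lb R m sigma m (m + sigma) (K * expR (- (1 / 2))).
      rewrite (_ : m + sigma - m = sigma) in X; last by lra.
      apply: X; first lra.
        by rewrite mulr_ge0 // expR_ge0.
      move=> x /andP[x1 x2]; rewrite pdfE' ler_wpM2l // ler_expR.
      apply: hB => //.
      have : 0 <= x - m <= sigma by lra.
      by move=> /andP[a b]; nra.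
    apply: gPr_le => //.
    move=> x /=; rewrite !in_itv /= => /andP[mx _].
    by rewrite andbT; apply: le_trans mx; apply: ltW.
  have C := @core R sigma r eps D K hsigma r1 heps0 eL D0 Dle sK1.
  have C1 : 1 <= expR 3 * (8 / sigma * r) * (sigma ^+ 2 / (D + sigma)) * sigma * K *
      expR (- 1) * expR (- (1 / 2)).
    apply: le_trans C; rewrite -expR0 ler_expR.
    by rewrite mulr_ge0 // ?mulr_ge0 // invr_ge0 exprn_ge0 // ltW.
  apply: (le_trans N); rewrite (_ : t - (t - eps) = eps); last by lra.
  apply: (le_trans (@fin2 _ _ _ _ _ _ _ _ _ _ heps0 K0 A0 C1)).
  have L0' : 0 <= 8 / sigma * r by rewrite ltW.
  apply: ler_pM.
  - have E0 : 0 <= expR 3 * eps * (8 / sigma * r) by rewrite mulr_ge0 // mulr_ge0 // expR_ge0.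
    by apply: mulr_ge0 => //; apply: mulr_ge0; [exact: ltW | apply: mulr_ge0 => //; exact: expR_ge0].
  - by apply: mulr_ge0 => //; rewrite mulr_ge0 // mulr_ge0 // expR_ge0.
  - rewrite ler_wpM2l //.
    by rewrite mulr_ge0 // mulr_ge0 // expR_ge0.
  - exact: Blb.
Qed.
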